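(* Assume $n$ is even. If $n\equiv 0\pmod 4$ and $q$ is odd, then exactly two lines of $\mathcal D$ are fixed (setwise) by $j$; otherwise exactly one line of $\mathcal D$ is fixed by $j$.
   Context: Let $q$ be a prime power, $F=\mathbb F_q$, $n\ge 2$ an integer, and $L=\mathbb F_{q^n}\supseteq F$. Regard $L$ as an $n$-dimensional $F$-vector space; $\mathrm{PG}(n-1,q)$ denotes the projective space whose points are the one-dimensional $F$-subspaces $Fx$, $x\in L^*$, and whose lines are the two-dimensional $F$-subspaces (identified with their sets of points). Define $j:\mathrm{PG}(n-1,q)\to\mathrm{PG}(n-1,q)$ by $j(Fx)=Fx^{-1}$. When $n$ is even, $C$ denotes the unique subfield of $L$ of order $q^2$; for $x\in L^*$, $Cx$ is a two-dimensional $F$-subspace of $L$, regarded as a line of $\mathrm{PG}(n-1,q)$, and $\mathcal D=\{Cx: x\in L^*\}$ is the Desarguesian line spread. A line $\ell$ is fixed by $j$ if $j(\ell)=\ell$ as sets of points. *)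

(* Defs.v *)
From HB Require Import structures.
From mathcomp Require Import all_boot all_order all_algebra all_fingroup all_field.
Set Implicit Arguments. Unset Strict Implicit. Unset Printing Implicit Defensive.
Import GRing.Theory.
Local Open Scope ring_scope.

(* L is an F-vector space; points of PG(n-1,q) are the F-lines <[x]>%VS,
   x <> 0; the map j sends the point <[x]> to <[x^-1]>. *)
Definition jpoint (F : fieldType) (L : fieldExtType F) (x : L) : {vspace L} :=
  <[x^-1]>%VS.

(* The line Cx (a two-dimensional F-subspace when C has F-dimension 2). *)
Definition desline (F : fieldType) (L : fieldExtType F) (C : {subfield L}) (x : L)
  : {vspace L} := (C * <[x]>)%VS.

(* j(l) = l as sets of points: j maps every point of l into l, and every
   point of l is the image under j of some point of l. *)
Definition fixed_by_j (F : fieldType) (L : fieldExtType F) (l : {vspace L}) : Prop :=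
  (forall x : L, x != 0 -> x \in l -> (jpoint x <= l)%VS) /\
  (forall y : L, y != 0 -> y \in l ->
     exists2 x : L, (x != 0) && (x \in l) & jpoint x = <[y]>%VS).

Definition in_spread (F : fieldType) (L : fieldExtType F) (C : {subfield L})
  (l : {vspace L}) : Prop :=
  exists2 x : L, x != 0 & l = desline C x.

(* Main.v *)
Require Import Defs.
From HB Require Import structures.
From mathcomp Require Import all_boot all_order all_algebra all_fingroup all_field.
From mathcomp Require Import zify ring cyclic.
Import GRing.Theory.
Local Open Scope ring_scope.

Lemma geom_aux (x t : nat) : (0 < x)%N -> exists m : nat,
  ((x - 1) * m + 1 = x ^ t)%N /\ odd m = (0 < t)%N && (~~ odd x || odd t).
Proof.
move=> x0; elim: t => [|t [m [Hm Ho]]]; first by exists 0%N; rewrite muln0 expn0.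
exists (x * m + 1)%N; split.
  rewrite expnS -Hm. nia.
rewrite oddD oddM Ho /=; case: t {Hm Ho} => [|t] /=; first by case: (odd x).
by case: (odd x); case: (odd t).
Qed.

Section S.
Variables (F : finFieldType) (L : fieldExtType F) (C : {subfield L}).

Lemma memD (x y : L) : x != 0 -> (y \in desline C x) = (y / x \in C).
Proof.
move=> nx; apply/idP/idP => H.
  have: y * x^-1 \in (C * <[x]> * <[x^-1]>)%VS by rewrite memv_mul ?memv_line.
  by rewrite -prodvA prodv_line divff // prodv1.
by rewrite /desline -[y](divfK nx) memv_mul ?memv_line.
Qed.

Lemma desline_eq x y : x != 0 -> y != 0 -> x / y \in C -> desline C x = desline C y.
Proof.
move=> nx ny H; apply/vspaceP => z; rewrite !memD //.
have nxy : x / y != 0 by rewrite mulf_neq0 ?invr_eq0.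
have -> : z / y = z / x * (x / y) by rewrite mulrA divfK.
by rewrite (fpredMr _ H nxy).
Qed.

Lemma desline_eqE x y : x != 0 -> y != 0 -> desline C x = desline C y -> x / y \in C.
Proof.
move=> nx ny H; by rewrite -memD // -H memD // divff // rpred1.
Qed.

Lemma fixed_iff x : x != 0 -> fixed_by_j (desline C x) <-> x ^+ 2 \in C.
Proof.
move=> nx; split.
  case=> H1 _; have := H1 x nx; rewrite memD // divff // rpred1 => /(_ isT).
  rewrite -memvE memD // => Hx; rewrite -rpredV.
  suff <- : x^-1 / x = (x ^+ 2)^-1 by [].
  by rewrite expr2 invfM.
move=> H2; have H1 : forall z, z != 0 -> z \in desline C x -> z^-1 \in desline C x.
  move=> z nz; rewrite !memD // => Hz.
  have -> : z^-1 / x = (z / x)^-1 * (x ^+ 2)^-1.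
    by field; rewrite nz nx.
  by rewrite rpredM ?rpredV.
split.
  by move=> z nz Hz; rewrite /jpoint -memvE H1.
move=> y ny Hy; exists y^-1; first by rewrite invr_eq0 ny H1.
by rewrite /jpoint invrK.
Qed.
End S.
Arguments desline_eq {F L C x y}.
Arguments desline_eqE {F L C x y}.
Arguments fixed_iff {F L C x}.

Theorem mainTheorem4 (F : finFieldType) (L : fieldExtType F) (C : {subfield L}) :
  ~~ odd (\dim {:L}) ->
  \dim C = 2%N ->
  exists s : seq {vspace L},
    [/\ uniq s,
        size s = (if ((4 %| \dim {:L})%N && odd #|F|) then 2%N else 1%N)
      & forall l : {vspace L}, l \in s <-> (in_spread C l /\ fixed_by_j l)].
Proof.
move=> nodd dC.
set n := (\dim {:L})%N; set q := #|F|.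
have q1 : (1 < q)%N := finNzRing_gt1 F.
have q2 : (0 < q ^ 2)%N by rewrite expn_gt0 (ltnW q1).
set Q := (q ^ 2 - 1)%N.
have eQ : (q ^ 2 = Q.+1)%N by rewrite /Q subn1 prednK.
have inC (a : L) : a != 0 -> (a \in C) = (a ^+ Q == 1).
  move=> na; rewrite Fermat's_little_theorem /= dC eQ exprSr.
  apply/eqP/eqP => [H|->]; last by rewrite mul1r.
  by apply: (mulIf na); rewrite mul1r.
have full (x : L) : x != 0 -> x ^+ (q ^ n - 1) = 1.
  move=> nx; have := Fermat's_little_theorem (aspacef L) x.
  rewrite memvf /= => /esym/eqP.
  have qn : (0 < q ^ n)%N by rewrite expn_gt0 (ltnW q1).
  rewrite -(prednK qn) exprSr subn1 => H.
  by apply: (mulIf nx); rewrite mul1r.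
have [t nt] : exists t, n = (2 * t)%N.
  exists n./2; move: (odd_double_half n); rewrite (negbTE nodd) add0n => {1}<-.
  by rewrite -muln2 mulnC.
have t0 : (0 < t)%N.
  have : (\dim C <= n)%N by apply: dimvS; apply: subvf.
  rewrite dC nt; case: t {nt} => //.
have [m [Hm Ho]] := @geom_aux (q ^ 2) t q2.
have eN : (q ^ n - 1 = Q * m)%N by rewrite nt expnM -Hm addnK.
have econd : ((4 %| n)%N && odd q) = ~~ odd m.
  rewrite Ho t0 oddX /= nt -[4%N]/(2 * 2)%N dvdn_pmul2l // dvdn2.
  by case: (odd q); case: (odd t).
rewrite -/n -/q econd.
have cls (x : L) : x != 0 -> x ^+ 2 \in C -> (x \in C) \/ (x ^+ Q = -1).
  move=> nx; rewrite (inC _ (expf_neq0 2 nx)) -exprM mulnC exprM sqrf_eq1 -(inC _ nx).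
  by case/orP => [->|/eqP]; [left | right].
have spread_fixed (x : L) : x != 0 -> x ^+ 2 \in C ->
    in_spread C (desline C x) /\ fixed_by_j (desline C x).
  by move=> nx H; split; [exists x | apply/fixed_iff].
have one2 : (1 : L) ^+ 2 \in C by rewrite expr1n rpred1.
have n1 : (1 : L) != 0 := oner_neq0 L.
have back l : in_spread C l -> fixed_by_j l -> exists2 x : L, x != 0 &
    [/\ l = desline C x, x ^+ 2 \in C & ((x \in C) \/ x ^+ Q = -1)].
  case=> x nx -> /(fixed_iff nx) H; exists x => //; split => //; exact: cls.
case: (boolP (odd m)) => om.
  exists [:: desline C 1]; split => // l; rewrite inE; split.
    by move/eqP ->; apply: spread_fixed.
  case=> Hs Hf; have [x nx [-> H2 [Hc|HQ]]] := back l Hs Hf; apply/eqP.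
    by apply: desline_eq => //; rewrite divr1.
  have := full x nx; rewrite eN exprM HQ -signr_odd om expr1 => m1.
  by apply: desline_eq => //; rewrite divr1 inC // HQ m1 eqxx.
set N := (q ^ n - 1)%N.
have qn1 : (1 < q ^ n)%N.
  by rewrite -{1}(expn0 q) ltn_exp2l // nt muln_gt0 t0.
have N0 : (0 < N)%N by rewrite /N subn_gt0.
have cardL : #|finvect_type L| = (q ^ n)%N.
  by have := card_vspace (fullv : {vspace finvect_type L}); rewrite card_vspacef.
pose rs : seq L := enum (predC1 (0 : finvect_type L)).
have [g _ pg] : exists2 g, g \in rs & N.-primitive_root g.
  apply/hasP; apply: has_prim_root => //.
  - have Hall : all (fun z : finvect_type L => N.-unity_root (z : L))
        (enum (predC1 (0 : finvect_type L))).
      by apply/allP => z; rewrite mem_enum /= => nz; rewrite unity_rootE full.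
    exact: Hall.
  - exact: (enum_uniq (predC1 (0 : finvect_type L))).
  - have Hs : size (enum (predC1 (0 : finvect_type L))) = N.
      by rewrite -cardE cardC1 cardL /N subn1.
    exact: (eq_leq (esym Hs)).
have em : m = (m./2).*2.
  by move: (odd_double_half m); rewrite (negbTE om) add0n.
set k := (m./2 * Q)%N.
have eNk : N = (2 * k)%N by rewrite /N eN {1}em /k -muln2; nia.
set x0 := g ^+ m./2.
have ng : g != 0 by rewrite (prim_root_eq0 pg) -lt0n.
have nx0 : x0 != 0 by rewrite expf_neq0.
have x0Q1 : x0 ^+ Q != 1.
  rewrite /x0 -exprM -/k -(prim_order_dvd pg); apply/negP => /dvdn_leq.
  have k0 : (0 < k)%N by move: N0; rewrite eNk; lia.
  by move=> /(_ k0); rewrite eNk; lia.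
have x0Q : x0 ^+ Q = -1.
  have : (x0 ^+ Q) ^+ 2 == 1.
    by rewrite /x0 -!exprM mulnA -/k mulnC -eNk (prim_expr_order pg).
  by rewrite sqrf_eq1 (negbTE x0Q1) => /eqP.
have nC : x0 \notin C by rewrite inC.
have x02 : x0 ^+ 2 \in C.
  by rewrite inC ?expf_neq0 // -exprM mulnC exprM x0Q sqrrN expr1n.
have m10 : (-1 : L) != 0 by rewrite oppr_eq0.
exists [:: desline C 1; desline C x0]; split => //.
  rewrite /= inE andbT; apply/negP => /eqP /(desline_eqE n1 nx0).
  by rewrite div1r rpredV (negbTE nC).
move=> l; rewrite !inE; split.
  by case/orP => /eqP ->; apply: spread_fixed.
case=> Hs Hf; have [x nx [-> H2 [Hc|HQ]]] := back l Hs Hf; apply/orP.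
  by left; apply/eqP; apply: desline_eq => //; rewrite divr1.
right; apply/eqP; apply: desline_eq => //.
rewrite inC ?mulf_neq0 ?invr_eq0 // exprMn exprVn HQ x0Q divff //.
Qed.
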